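(* Let $\mathbf{A}\in\mathbb{R}^{m\times n}$ with $\|\mathbf{A}\|_\infty\le1$, $b\in\mathbb{R}^n$, $c\in\mathbb{R}^m$, $\mu>0$, $\epsilon\in[0,2]$ and $\tau>0$. Let $S_\tau=\{i\in[m]: c_i\ge\min_{i'\in[m]}c_{i'}+\tau\}$ and $\mathcal{X}'=\{x\in\Delta^m: x_i=0\text{ for all }i\in S_\tau\}$. Then $$\min_{x\in\mathcal{X}'}\max_{y\in[0,1]^n}f_{\mu,\epsilon}(x,y)\le\min_{x\in\Delta^m}\max_{y\in[0,1]^n}f_{\mu,\epsilon}(x,y)+\mu m\exp\Big(-\frac{\tau-3}{\mu}\Big).$$
   Context: $f_{\mu,\epsilon}(x,y)=x^\top\mathbf{A}y+c^\top x-b^\top y+\mu\sum_i x_i\log x_i-\frac\epsilon2 x^\top|\mathbf{A}|(y\circ y)$ on $\Delta^m\times[0,1]^n$, with $0\log0=0$; $|\mathbf{A}|$ is entrywise absolute value, $y\circ y$ entrywise square, $\|\mathbf{A}\|_\infty=\max_i\sum_j|\mathbf{A}_{ij}|$, $\Delta^m$ the probability simplex. *)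

(* Defs.v *)
From HB Require Import structures.
From mathcomp Require Import all_boot all_order all_algebra.
From mathcomp Require Import all_classical all_reals.
From mathcomp Require Import sequences exp.
Set Implicit Arguments. Unset Strict Implicit. Unset Printing Implicit Defensive.
Import Order.TTheory GRing.Theory Num.Theory.
Local Open Scope ring_scope.
Local Open Scope classical_set_scope.

Section Defs.
Variable R : realType.
Variables m n : nat.

Definition xlogx (t : R) : R := if t == 0 then 0 else t * ln t.

Definition mx_inf_norm (A : 'M[R]_(m, n)) : R :=
  \big[Num.max/0]_(i < m) \sum_(j < n) `|A i j|.

Definition f_mu_eps (A : 'M[R]_(m, n)) (b : 'I_n -> R) (c : 'I_m -> R)
    (mu eps : R) (x : 'I_m -> R) (y : 'I_n -> R) : R :=
  \sum_(i < m) \sum_(j < n) x i * A i j * y j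
  + \sum_(i < m) c i * x i
  - \sum_(j < n) b j * y j
  + mu * \sum_(i < m) xlogx (x i)
  - eps / 2 * \sum_(i < m) \sum_(j < n) x i * `|A i j| * (y j ^+ 2).

Definition simplex : set ('I_m -> R) :=
  [set x | (forall i, 0 <= x i) /\ \sum_(i < m) x i = 1].

Definition box01 : set ('I_n -> R) := [set y | forall j, 0 <= y j <= 1].

Definition cmin (c : 'I_m -> R) : R := inf (range c).

Definition S_tau (c : 'I_m -> R) (tau : R) : set 'I_m :=
  [set i | cmin c + tau <= c i].

Definition Xprime (c : 'I_m -> R) (tau : R) : set ('I_m -> R) :=
  [set x | simplex x /\ forall i, S_tau c tau i -> x i = 0].

(* max_{y in [0,1]^n} f(x,y) (attained: continuous on compact) *)
Definition maxf A b c mu eps (x : 'I_m -> R) : R :=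
  sup [set f_mu_eps A b c mu eps x y | y in box01].

(* min_{x in X} max_y f(x,y) (attained: continuous on compact) *)
Definition minmax A b c mu eps (X : set ('I_m -> R)) : R :=
  inf [set maxf A b c mu eps x | x in X].

End Defs.

(* Main.v *)
Require Import Defs.
From HB Require Import structures.
From mathcomp Require Import all_boot all_order all_algebra.
From mathcomp Require Import all_classical all_reals.
From mathcomp Require Import sequences exp.
From mathcomp Require Import ring lra.
Import Order.TTheory GRing.Theory Num.Theory.
Local Open Scope ring_scope.

Section Aux.
Variable R : realType.

Lemma xlogx0 : xlogx (0 : R) = 0.
Proof. by rewrite /xlogx eqxx. Qed.

Lemma xlogx_pos (t : R) : 0 < t -> xlogx t = t * ln t.
Proof. by move=> t0; rewrite /xlogx gt_eqF. Qed.

Lemma xlogx_le0 (t : R) : 0 <= t <= 1 -> xlogx t <= 0.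
Proof.
move=> /andP[t0 t1]; rewrite /xlogx; case: ifP => // _.
by rewrite mulr_ge0_le0 // ln_le0.
Qed.

Lemma xlogx_ge (t : R) : 0 <= t -> t - 1 <= xlogx t.
Proof.
rewrite le_eqVlt => /orP[/eqP<-|t0]; first by rewrite xlogx0; lra.
rewrite xlogx_pos //.
have h := expR_ge1Dx (- ln t).
rewrite expRN lnK ?posrE // in h.
have : t * (1 + - ln t) <= t * t^-1 by rewrite ler_wpM2l // ltW.
rewrite mulfV ?gt_eqF //; lra.
Qed.

Lemma xlogx_incr (t s : R) : 0 <= t -> 0 <= s -> t + s <= 1 ->
  xlogx (t + s) - xlogx t <= s.
Proof.
rewrite le_eqVlt => /orP[/eqP<-|t0] s0 ts1.
  rewrite add0r in ts1 *; rewrite xlogx0 subr0.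
  have : xlogx s <= 0 by apply: xlogx_le0; rewrite s0 ts1.
  lra.
have ts0 : 0 < t + s by lra.
rewrite !xlogx_pos //.
set a := ln t; set bb := ln (t + s).
have ea : expR a = t by rewrite lnK ?posrE.
have eb : expR bb = t + s by rewrite lnK ?posrE.
have h : expR a * (1 + (bb - a)) <= expR bb.
  rewrite -[X in _ <= X](_ : expR (a + (bb - a)) = _); last by congr expR; lra.
  by rewrite expRD ler_wpM2l ?expR_ge0 ?expR_ge1Dx.
rewrite ea eb in h.
have hb : bb <= 0 by rewrite ln_le0.
have : s * bb <= 0 by rewrite mulr_ge0_le0.
nra.
Qed.

Lemma key (mu k t : R) : 0 < mu -> 0 <= t ->
  t * (k + mu) - mu * xlogx t <= mu * expR (k / mu).
Proof.
move=> mu0; rewrite le_eqVlt => /orP[/eqP<-|t0].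
  by rewrite xlogx0 mul0r mulr0 subr0 mulr_ge0 ?expR_ge0 ?ltW.
rewrite xlogx_pos //.
have h : t * (1 + (k / mu - ln t)) <= expR (k / mu).
  set a := k / mu.
  have -> : expR a = expR (ln t + (a - ln t)) by rewrite addrC subrK.
  rewrite expRD lnK ?posrE // ler_wpM2l ?expR_ge1Dx // ?ltW //.
have -> : t * (k + mu) - mu * (t * ln t) = mu * (t * (1 + (k / mu - ln t))).
  by field; rewrite gt_eqF.
by rewrite ler_wpM2l // ltW.
Qed.

End Aux.

Section Main.
Variable R : realType.
Variables m n : nat.
Variable A : 'M[R]_(m, n).
Variable b : 'I_n -> R.
Variable c : 'I_m -> R.
Variables mu eps : R.

Definition w (y : 'I_n -> R) (i : 'I_m) : R :=
  \sum_(j < n) A i j * y j + c i - eps / 2 * \sum_(j < n) `|A i j| * y j ^+ 2.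

Lemma fE (x : 'I_m -> R) y : f_mu_eps A b c mu eps x y =
  \sum_(i < m) x i * w y i + mu * \sum_(i < m) xlogx (x i) - \sum_(j < n) b j * y j.
Proof.
have -> : \sum_(i < m) x i * w y i = \sum_(i < m) \sum_(j < n) x i * A i j * y j
   + \sum_(i < m) c i * x i
   - eps / 2 * \sum_(i < m) \sum_(j < n) x i * `|A i j| * (y j ^+ 2).
  rewrite (eq_bigr (fun i => \sum_(j < n) x i * A i j * y j + c i * x i
     - eps / 2 * \sum_(j < n) x i * `|A i j| * y j ^+ 2)) => [|i _].
    by rewrite sumrB big_split /= -mulr_sumr.
  rewrite /w mulrBr mulrDr; congr (_ + _ - _).
  - by rewrite mulr_sumr; apply: eq_bigr => j _; rewrite mulrA.
  - by rewrite mulrC.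
  - by rewrite mulrCA mulr_sumr; congr (_ * _); apply: eq_bigr => j _; rewrite mulrA.
rewrite /f_mu_eps; lra.
Qed.

Lemma row_le i : \sum_(j < n) `|A i j| <= mx_inf_norm A.
Proof. exact: le_bigmax. Qed.

Hypothesis hA : mx_inf_norm A <= 1.
Hypothesis he : 0 <= eps <= 2.
Hypothesis hmu : 0 < mu.

Lemma w_bounds y i : box01 y -> c i - 2 <= w y i <= c i + 1.
Proof.
move=> hy.
have hA' := hA.
have hN := row_le i.
have h1 : `|\sum_(j < n) A i j * y j| <= \sum_(j < n) `|A i j|.
  apply: (le_trans (ler_norm_sum _ _ _)); apply: ler_sum => j _.
  have /andP[y0 y1] := hy j.
  rewrite normrM (ger0_norm y0).
  have : 0 <= `|A i j| by []. nra.
have h2 : 0 <= \sum_(j < n) `|A i j| * y j ^+ 2.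
  by apply: sumr_ge0 => j _; rewrite mulr_ge0 // sqr_ge0.
have h3 : \sum_(j < n) `|A i j| * y j ^+ 2 <= \sum_(j < n) `|A i j|.
  apply: ler_sum => j _; have /andP[y0 y1] := hy j.
  have : y j ^+ 2 <= 1 by rewrite expr2 mulr_ile1.
  have : 0 <= `|A i j| by []. nra.
move: h1; rewrite ler_norml => /andP[h1 h1'].
move: he => /andP[e0 e2].
have h4 : 0 <= eps / 2 * \sum_(j < n) `|A i j| * y j ^+ 2 by rewrite mulr_ge0 // divr_ge0.
have h5 : eps / 2 * \sum_(j < n) `|A i j| * y j ^+ 2 <= 1.
  have : eps / 2 <= 1 by rewrite ler_pdivrMr //; lra.
  move=> ?; rewrite mulr_ile1 ?divr_ge0 //; lra.
rewrite /w; apply/andP; split; lra.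
Qed.

Lemma le1_simplex (x : 'I_m -> R) i : simplex x -> x i <= 1.
Proof.
move=> [x0 x1]; rewrite -x1 (bigD1 i) //= lerDl.
by apply: sumr_ge0 => j _.
Qed.

Definition U := \sum_(i < m) (1 + `|c i|) + \sum_(j < n) `|b j|.
Definition L := \sum_(i < m) (- `|c i| - mu).

Lemma f_ub (x : 'I_m -> R) y : simplex x -> box01 y -> f_mu_eps A b c mu eps x y <= U.
Proof.
move=> hx hy; rewrite fE /U.
have h1 : \sum_(i < m) x i * w y i <= \sum_(i < m) (1 + `|c i|).
  apply: ler_sum => i _.
  have /andP[_ hw] := w_bounds y i hy.
  have x0 := hx.1 i; have x1 := le1_simplex x i hx.
  have : c i <= `|c i| by apply: ler_norm.
  have : 0 <= `|c i| by [].
  nra.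
have h2 : mu * \sum_(i < m) xlogx (x i) <= 0.
  apply: mulr_ge0_le0; first exact: ltW.
  apply: sumr_le0 => i _.
  by apply: xlogx_le0; rewrite hx.1 (le1_simplex x i hx).
have h3 : - \sum_(j < n) b j * y j <= \sum_(j < n) `|b j|.
  rewrite -sumrN; apply: ler_sum => j _.
  have /andP[y0 y1] := hy j.
  have : - (b j * y j) <= `|b j * y j| by rewrite -normrN ler_norm.
  rewrite normrM (ger0_norm y0).
  have : 0 <= `|b j| by [].
  nra.
lra.
Qed.

Definition y0 : 'I_n -> R := fun _ => 0.

Lemma box0 : box01 y0.
Proof. by move=> j; rewrite /y0 lexx ler01. Qed.

Lemma f_lb (x : 'I_m -> R) : simplex x -> L <= f_mu_eps A b c mu eps x y0.
Proof.
move=> hx; rewrite /f_mu_eps.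
have e1 : \sum_(i < m) \sum_(j < n) x i * A i j * y0 j = 0.
  by apply: big1 => i _; apply: big1 => j _; rewrite /y0 mulr0.
have e2 : \sum_(j < n) b j * y0 j = 0.
  by apply: big1 => j _; rewrite /y0 mulr0.
have e3 : \sum_(i < m) \sum_(j < n) x i * `|A i j| * y0 j ^+ 2 = 0.
  by apply: big1 => i _; apply: big1 => j _; rewrite /y0 expr0n mulr0.
rewrite e1 e2 e3 add0r subr0 mulr0 subr0 mulr_sumr -big_split /=.
apply: ler_sum => i _.
have x0 := hx.1 i; have x1 := le1_simplex x i hx.
have := @xlogx_ge _ _ x0.
have : - `|c i| <= c i by rewrite lerNnormlW.
have : c i <= `|c i| by apply: ler_norm.
have : 0 <= `|c i| by [].
have := hmu; move=> *; nra.
Qed.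

Definition fset (x : 'I_m -> R) := ([set f_mu_eps A b c mu eps x y | y in @box01 R n])%classic.

Lemma fset_ub (x : 'I_m -> R) : simplex x -> has_ubound (fset x).
Proof.
by move=> hx; exists U => z [y hy <-]; apply: f_ub.
Qed.

Lemma maxf_ge (x : 'I_m -> R) y : simplex x -> box01 y ->
  f_mu_eps A b c mu eps x y <= maxf A b c mu eps x.
Proof. by move=> hx hy; apply: (ub_le_sup (fset_ub x hx)); exists y. Qed.

Lemma maxf_le (x : 'I_m -> R) K : (forall y, box01 y -> f_mu_eps A b c mu eps x y <= K) ->
  maxf A b c mu eps x <= K.
Proof.
move=> h; apply: ge_sup; first by exists (f_mu_eps A b c mu eps x y0), y0 => //; exact: box0.
by move=> z [y hy <-]; apply: h.
Qed.

Lemma maxf_lb (x : 'I_m -> R) : simplex x -> L <= maxf A b c mu eps x.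
Proof. by move=> hx; apply: le_trans (f_lb x hx) (maxf_ge x y0 hx box0). Qed.

Lemma core (tau : R) : (0 < m)%N -> 0 < tau ->
  minmax A b c mu eps (Xprime c tau)
    <= minmax A b c mu eps (@simplex R m)
       + mu * m%:R * expR (- ((tau - 3) / mu)).
Proof.
move=> m0 htau.
set E := mu * m%:R * expR (- ((tau - 3) / mu)).
have [i0 _ hi0] := @arg_minP _ R 'I_m (Ordinal m0) xpredT c isT.
have hcmin : c i0 <= cmin c.
  apply: lb_le_inf; first by exists (c i0), i0.
  by move=> z [j _ <-]; apply: hi0.
pose P : pred 'I_m := fun i => c i0 + tau <= c i.
have Pi0 : ~~ P i0 by rewrite /P -ltNge ltrDl.
have main : forall x, simplex x ->
    minmax A b c mu eps (Xprime c tau) <= maxf A b c mu eps x + E.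
  move=> x hx.
  pose s := \sum_(i | P i) x i.
  have s0 : 0 <= s by apply: sumr_ge0 => i _; exact: hx.1.
  pose x' := fun i => if P i then 0 else if i == i0 then x i + s else x i.
  have hx' : simplex x'.
    split.
      move=> i; rewrite /x'; case: ifP => // _; case: ifP => _.
        by apply: addr_ge0 => //; exact: hx.1.
      exact: hx.1.
    have -> : \sum_(i < m) x' i
        = \sum_(i < m) ((if ~~ P i then x i else 0) + (if i == i0 then s else 0)).
      apply: eq_bigr => i _; rewrite /x'; case: eqVneq => [->|ne].
        by rewrite (negbTE Pi0) /=.
      by case: (P i); rewrite /= ?add0r ?addr0.
    rewrite big_split /= -!big_mkcond /= big_pred1_eq.
    have := hx.2; rewrite (bigID P) /= -/s.
    lra.
  have hX' : Xprime c tau x'.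
    split => // i hi; rewrite /x'.
    have -> : P i by rewrite /P; apply: le_trans hi; rewrite lerD2r.
    by [].
  have lbX : has_lbound [set maxf A b c mu eps z | z in Xprime c tau]%classic.
    by exists L => z [z' hz' <-]; apply: maxf_lb; exact: hz'.1.
  have h1 : minmax A b c mu eps (Xprime c tau) <= maxf A b c mu eps x'.
    by apply: (ge_inf lbX); exists x'.
  apply: le_trans h1 _; apply: maxf_le => y hy.
  apply: (@le_trans _ _ (f_mu_eps A b c mu eps x y + E)); last first.
    by rewrite lerD2r; apply: maxf_ge.
  rewrite !fE.
  suff : \sum_(i < m) (x' i * w y i + mu * xlogx (x' i))
       - \sum_(i < m) (x i * w y i + mu * xlogx (x i)) <= E.
    rewrite !big_split /= -!mulr_sumr. lra.
  rewrite -sumrB.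
  pose g i := x i * (2 - c i) - mu * xlogx (x i).
  pose K := 1 + c i0 + mu.
  apply: (@le_trans _ _ (\sum_(i < m) ((if P i then g i else 0)
                                      + (if i == i0 then s * K else 0)))).
    apply: ler_sum => i _; rewrite /x'.
    have /andP[wl wu] := w_bounds y i hy.
    case: ifPn => Pi.
      case: eqVneq => [ei|ne].
        by move: Pi; rewrite ei (negbTE Pi0).
      rewrite addr0 xlogx0 mul0r mulr0 addr0 /g.
      have x0 := hx.1 i.
      have : x i * (c i - 2) <= x i * w y i by rewrite ler_wpM2l.
      lra.
    case: eqVneq => [ei|ne].
      rewrite ei add0r.
      have hle := le1_simplex x' i0 hx'.
      rewrite /x' (negbTE Pi0) eqxx in hle.
      have hd := @xlogx_incr _ _ _ (hx.1 i0) s0 hle.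
      have /andP[_ wu0] := w_bounds y i0 hy.
      have : mu * (xlogx (x i0 + s) - xlogx (x i0)) <= mu * s.
        by rewrite ler_wpM2l // ltW.
      have : s * w y i0 <= s * (c i0 + 1) by rewrite ler_wpM2l.
      rewrite /K; lra.
    by rewrite subrr addr0.
  rewrite big_split /= -!big_mkcond big_pred1_eq /s mulr_suml -big_split /=.
  apply: (@le_trans _ _ (\sum_(i | P i) (mu * expR (- ((tau - 3) / mu))))).
    apply: ler_sum => i Pi.
    have := @key _ _ (3 - tau) _ hmu (hx.1 i).
    rewrite (_ : (3 - tau) / mu = - ((tau - 3) / mu)); last by rewrite -mulNr opprB.
    have x0 := hx.1 i.
    have : 0 <= x i * (c i - (c i0 + tau)) by rewrite mulr_ge0 // subr_ge0.
    rewrite /g /K; lra.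
  rewrite big_mkcond /=.
  apply: (@le_trans _ _ (\sum_(i < m) (mu * expR (- ((tau - 3) / mu))))).
    apply: ler_sum => i _; case: ifP => _ //.
    by rewrite mulr_ge0 ?expR_ge0 ?ltW.
  by rewrite sumr_const card_ord -[_ *+ m]mulr_natr /E mulrAC.
pose d : 'I_m -> R := fun i => (i == i0)%:R.
have hd : simplex d.
  split; first by move=> i; rewrite /d ler0n.
  rewrite (bigD1 i0) //= /d eqxx big1 ?addr0 // => i /negbTE ->.
  by [].
have : minmax A b c mu eps (Xprime c tau) - E <= minmax A b c mu eps (@simplex R m).
  apply: lb_le_inf; first by exists (maxf A b c mu eps d), d.
  by move=> z [x hx <-]; have := main x hx; lra.
lra.
Qed.

End Main.

Theorem mainTheorem8 (R : realType) (m n : nat) (A : 'M[R]_(m, n))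
    (b : 'I_n -> R) (c : 'I_m -> R) (mu eps tau : R) :
  (0 < m)%N ->
  mx_inf_norm A <= 1 ->
  0 < mu -> 0 <= eps <= 2 -> 0 < tau ->
  minmax A b c mu eps (Xprime c tau)
    <= minmax A b c mu eps (@simplex R m)
       + mu * m%:R * expR (- ((tau - 3) / mu)).
Proof.
move=> m0 hA hmu he htau.
exact: (@core R m n A b c mu eps hA he hmu tau m0 htau).
Qed.
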